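(* Let $A\subseteq\Omega$ be arbitrary. Then: (i) for each $\varepsilon>0$ there exists a $\mathcal{P}$-e-process $(E^\varepsilon_t)_{t\in\mathbb{N}_0}$ such that $\lim_{t\to\infty}E^\varepsilon_t = 1/(\mu^*(A)+\varepsilon)$ at every point of $A$; (ii) for any $c\in[1,\infty]$, if there exists a $\mathcal{P}$-e-process $(E_t)_{t\in\mathbb{N}_0}$ such that $\sup_{t\in\mathbb{N}_0}E_t\ge c$ at every point of $A$, then $\mu^*(A)\le 1/c$ (with $1/\infty=0$).
   Context: Standing setup: $(\Omega, (\mathcal{F}_t)_{t\in\mathbb{N}_0}, \mathcal{F})$ is a filtered measurable space with $\mathcal{F} = \sigma\big(\bigcup_{t} \mathcal{F}_t\big)$. A stopping time is a map $\tau:\Omega\to\mathbb{N}_0\cup\{\infty\}$ with $\{\tau \le t\}\in\mathcal{F}_t$ for all $t$; $\mathcal{T}$ denotes the set of all stopping times. $\mathcal{P}$ is an arbitrary family of probability measures on $\mathcal{F}$. The inverse-capital measure is defined for every $A\subseteq\Omega$ by $\mu^*(A) = \inf_{\tau\in\mathcal{T}:\, A\subseteq\{\tau<\infty\}} \sup_{\mathbb{P}\in\mathcal{P}} \mathbb{P}(\tau<\infty)$. A $\mathcal{P}$-e-process is a nonnegative (possibly $[0,\infty]$-valued) process $(E_t)_{t\in\mathbb{N}_0}$ adapted to $(\mathcal{F}_t)$ such that $\mathbb{E}_{\mathbb{P}}[E_\tau]\le 1$ for every $\mathbb{P}\in\mathcal{P}$ and every $\tau\in\mathcal{T}$, with the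 convention $E_\infty=\limsup_{t\to\infty}E_t$. *)

(* Defs.v *)
From HB Require Import structures.
From mathcomp Require Import all_boot all_order all_algebra.
From mathcomp Require Import all_classical all_reals all_analysis measurable_realfun.
Set Implicit Arguments. Unset Strict Implicit. Unset Printing Implicit Defensive.
Import Order.TTheory GRing.Theory Num.Theory.
Local Open Scope classical_set_scope.
Local Open Scope ring_scope.

Section Defs.
Context {d : measure_display} {T : measurableType d} {R : realType}.

Definition is_filtration (F : nat -> set (set T)) : Prop :=
  [/\ forall t, sigma_algebra setT (F t),
      forall t, F t `<=` F t.+1 &
      (@measurable d T) = <<s \bigcup_(t in setT) F t >>].

(* Stopping times with values in N_0 \cup {infinity}; None encodes infinity. *)
Definition stopping_time (F : nat -> set (set T)) (tau : T -> option nat) : Prop :=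
  forall t : nat, F t [set w | exists2 n, tau w = Some n & (n <= t)%N].

Definition finite_set (tau : T -> option nat) : set T := [set w | tau w <> None].

(* mu^*(A) = inf_{tau : A ⊆ {tau < oo}} sup_{P in Pfam} P(tau < oo);
   the sup over P is taken in [0, +oo] (value 0 for an empty family). *)
Definition mustar (F : nat -> set (set T)) (Pfam : set (probability T R))
    (A : set T) : \bar R :=
  ereal_inf [set ereal_sup ([set P (finite_set tau) | P in Pfam] `|` [set 0%E])
            | tau in [set tau | stopping_time F tau /\ A `<=` finite_set tau]].

Definition stopped (E : nat -> T -> \bar R) (tau : T -> option nat) : T -> \bar R :=
  fun w => match tau w with
           | Some n => E n w
           | None => limn_esup (fun t => E t w)
           end.

Definition e_process (F : nat -> set (set T)) (Pfam : set (probability T R))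
    (E : nat -> T -> \bar R) : Prop :=
  [/\ forall t w, (0 <= E t w)%E,
      forall t (B : set (\bar R)), measurable B -> F t (E t @^-1` B) &
      forall P tau, Pfam P -> stopping_time F tau ->
        (\int[P]_w stopped E tau w <= 1)%E].

Definition inv_ext (c : \bar R) : \bar R :=
  match c with
  | r%:E => (r^-1)%:E
  | _ => 0%E
  end.

End Defs.

(* Main.v *)
Require Import Defs.
From HB Require Import structures.
From mathcomp Require Import all_boot all_order all_algebra.
From mathcomp Require Import all_classical all_reals all_analysis measurable_realfun.
From mathcomp Require Import ring lra.
Import Order.TTheory GRing.Theory Num.Theory.
Local Open Scope classical_set_scope.
Local Open Scope ring_scope.

Section H.
Local Open Scope ereal_scope.
Context (d : measure_display) (T : measurableType d) (R : realType).

Lemma my_le_integral (mu : {measure set T -> \bar R}) (f g : T -> \bar R) :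
  (forall x, 0 <= f x) -> (forall x, f x <= g x) ->
  \int[mu]_x f x <= \int[mu]_x g x.
Proof.
move=> f0 fg.
have g0 x : 0 <= g x by exact: le_trans (f0 x) (fg x).
rewrite !ge0_integralTE//; apply: ereal_sup_le => _ [h hf <-].
by exists h => // x; exact: le_trans (hf x) (fg x).
Qed.

Variable F : nat -> set (set T).
Hypothesis hF : is_filtration F.

Lemma F_meas t A : F t A -> measurable A.
Proof.
case: hF => _ _ -> FA; apply: sub_sigma_algebra; by exists t.
Qed.

Lemma F_mono s t : (s <= t)%N -> F s `<=` F t.
Proof.
case: hF => _ Fi _; elim: t => [|t IH].
  by rewrite leqn0 => /eqP ->.
rewrite leq_eqVlt => /orP[/eqP -> //|]; rewrite ltnS => /IH st A /st; exact: Fi.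
Qed.

Lemma FT t : F t setT.
Proof. case: hF => /(_ t) [F0 FC _] _ _; by rewrite -(setD0 setT); apply: FC. Qed.

Lemma F0 t : F t set0.
Proof. by case: hF => /(_ t) [F0 FC _] _ _. Qed.

Lemma FC t A : F t A -> F t (~` A).
Proof. case: hF => /(_ t) [_ FC _] _ _ /FC; by rewrite setTD. Qed.

Lemma Fcup t (U : (set T)^nat) : (forall n, F t (U n)) -> F t (\bigcup_n U n).
Proof. case: hF => /(_ t) [_ _ FU] _ _; exact: FU. Qed.

Definition le_set (tau : T -> option nat) t :=
  [set w | exists2 n, tau w = Some n & (n <= t)%N].

Lemma finite_meas tau : stopping_time F tau -> measurable (Defs.finite_set tau : set T).
Proof.
move=> st.
have -> : Defs.finite_set tau = \bigcup_t le_set tau t.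
  apply/seteqP; split => w; rewrite /Defs.finite_set /le_set /=.
    by case E: (tau w) => [n|] // _; exists n => //; exists n.
  by move=> [t _ [n -> _]].
by apply: bigcupT_measurable => t; apply: (@F_meas t); exact: st.
Qed.

Lemma preim_indic t (S : set T) (k : R) (B : set (\bar R)) :
  F t S -> F t ((fun w => (k * \1_S w)%:E) @^-1` B).
Proof.
move=> FS.
have [hk|hk] := pselect (B k%:E); have [h0|h0] := pselect (B 0).
- suff -> : (fun w => (k * \1_S w)%:E) @^-1` B = setT by exact: FT.
  apply/seteqP; split => w //= _; rewrite /indic; case: (w \in S).
    by rewrite mulr1. by rewrite mulr0.
- suff -> : (fun w => (k * \1_S w)%:E) @^-1` B = S by [].
  apply/seteqP; split => w /=; rewrite /indic.
    by case: (boolP (w \in S)) => [/set_mem//|_]; rewrite mulr0.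
  by move=> Sw; rewrite mem_set// mulr1.
- suff -> : (fun w => (k * \1_S w)%:E) @^-1` B = ~` S by exact: FC.
  apply/seteqP; split => w /=; rewrite /indic.
    case: (boolP (w \in S)) => [_|/negP Sw]; last by move=> _ /mem_set.
    by rewrite mulr1.
  by move=> Sw; rewrite memNset// mulr0.
- suff -> : (fun w => (k * \1_S w)%:E) @^-1` B = set0 by exact: F0.
  apply/seteqP; split => w //=; rewrite /indic.
  by case: (w \in S); rewrite ?mulr1 ?mulr0.
Qed.


Lemma mustar_ge0 (Pfam : set (probability T R)) A : 0 <= mustar F Pfam A.
Proof.
apply: le_ereal_inf_tmp => _ [tau _ <-]; apply: ereal_sup_ubound; by right.
Qed.

Lemma mustar_le1 (Pfam : set (probability T R)) A : mustar F Pfam A <= 1.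
Proof.
pose tau0 : T -> option nat := fun _ => Some 0%N.
have st0 : stopping_time F tau0.
  move=> t; suff -> : [set w | exists2 n, tau0 w = Some n & (n <= t)%N] = setT by exact: FT.
  by apply/seteqP; split => w //= _; exists 0%N.
apply: le_trans (ereal_inf_lbound _) _.
  exists tau0; first by split => // w _; rewrite /Defs.finite_set /tau0.
  reflexivity.

apply: ge_ereal_sup => _ [[P _ <-]|->].
  exact/probability_le1/finite_meas.
by [].
Qed.

Lemma part2_claim (Pfam : set (probability T R)) A E r :
  e_process F Pfam E -> (0 < r)%R ->
  (forall w, A w -> exists t, r%:E <= E t w) ->
  mustar F Pfam A <= (r^-1)%:E.
Proof.
move=> [E0 Ead Eint] r0 hA.
pose tau w : option nat := match pselect (exists t, r%:E <= E t w) with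
  | left h => Some (ex_minn h) | right _ => None end.
have tauS w n : tau w = Some n -> r%:E <= E n w /\ forall m, r%:E <= E m w -> (n <= m)%N.
  rewrite /tau; case: pselect => // h [<-]; by case: ex_minnP.
have tauN w : tau w = None -> forall m, ~ (r%:E <= E m w).
  rewrite /tau; case: pselect => // h _ m hm; apply: h; by exists m.
have st : stopping_time F tau.
  move=> t.
  have -> : [set w | exists2 n, tau w = Some n & (n <= t)%N] =
      \bigcup_n (if (n <= t)%N then E n @^-1` `[r%:E, +oo[ else set0).
    apply/seteqP; split => w /=.
      move=> [n /tauS [h1 _] nt]; exists n => //; rewrite nt /=.
      by rewrite in_itv /= h1.
    move=> [n _]; case: ifP => // nt; rewrite /= in_itv /= andbT => h.
    case E': (tau w) => [m|]; last by have := tauN w E' n.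
    exists m => //; have [_ /(_ n h)] := tauS w m E'; move=> mn.
    exact: leq_trans mn nt.
  apply: Fcup => n; case: ifP => nt; last exact: F0.
  apply: (@F_mono n t nt); apply: Ead; exact: emeasurable_itv.
apply: le_trans (ereal_inf_lbound _) _.
  exists tau; first split => // w /hA [t ht].
    rewrite /Defs.finite_set /=; case E': (tau w) => [n|]; first by [].
    by have := tauN w E' t.
  reflexivity.
apply: ge_ereal_sup => _ [[P HP <-]|->]; last by rewrite lee_fin invr_ge0 ltW.
have mS := @finite_meas tau st.
have key : r%:E * P (Defs.finite_set tau) <= 1.
  apply: le_trans (Eint P tau HP st).
  have -> : P (Defs.finite_set tau) = \int[P]_(x in setT) (\1_(Defs.finite_set tau) x)%:E.
    by rewrite integral_indic// setIT.
  rewrite -(@integralZl_indic _ _ _ P setT measurableT (fun _ => Defs.finite_set tau))//; last first.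
    by move=> rn; have := lt_trans rn r0; rewrite ltxx.
  apply: my_le_integral => x.
    rewrite lee_fin; apply: mulr_ge0 (ltW r0) _; rewrite indicE; by case: (_ \in _).
  rewrite /stopped /indic; case E': (tau x) => [n|].
    rewrite mem_set; last by rewrite /Defs.finite_set /= E'.
    by rewrite mulr1; have [] := tauS x n E'.
  rewrite memNset; last by rewrite /Defs.finite_set /= E'.
  rewrite mulr0 limn_esup_lim; apply: lime_ge; first exact: is_cvg_esups.
  apply: nearW => n; apply: le_trans (E0 n x) _.
  by apply: ereal_sup_ubound; exists n => /=.
have P0 : 0 <= P (Defs.finite_set tau) by [].
have P1 : P (Defs.finite_set tau) <= 1 by exact: probability_le1.
move: key P0 P1; case: (P (Defs.finite_set tau)) => [p| |] //; rewrite !lee_fin => key p0 p1.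
have rr : (r * r^-1 = 1)%R by rewrite mulfV// gt_eqF.
have ri : (0 < r^-1)%R by rewrite invr_gt0.
nra.
Qed.


Lemma stopped_ge0 (E : nat -> T -> \bar R) : (forall t w, 0 <= E t w) ->
  forall tau w, 0 <= stopped E tau w.
Proof.
move=> E0 tau w; rewrite /stopped; case: (tau w) => [n|]; first exact: E0.
rewrite limn_esup_lim; apply: lime_ge; first exact: is_cvg_esups.
apply: nearW => n; apply: le_trans (E0 n w) _.
by apply: ereal_sup_ubound; exists n => /=.
Qed.

Lemma part1 (Pfam : set (probability T R)) A (eps : R) : (0 < eps)%R ->
  exists E : nat -> T -> \bar R, e_process F Pfam E /\
    forall w, A w ->
      (fun t => E t w) @ \oo --> ((fine (mustar F Pfam A) + eps)^-1)%:E.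
Proof.
move=> e0.
set x := fine (mustar F Pfam A).
have m0 := mustar_ge0 Pfam A; have m1 := mustar_le1 Pfam A.
have mx : mustar F Pfam A = x%:E.
  rewrite /x fineK// ge0_fin_numE//; exact: le_lt_trans m1 (ltey _).
have x0 : (0 <= x)%R by rewrite -lee_fin -mx.
have : mustar F Pfam A < (x + eps)%:E by rewrite mx lte_fin ltrDl.
case/ereal_inf_lt => _ [tau [st Atau] <-] hlt.
set k := ((x + eps)^-1)%R.
have k0 : (0 < k)%R by rewrite invr_gt0; lra.
pose E t w := (k * \1_(le_set tau t) w)%:E.
have Ecvg w : (fun t => E t w) @ \oo --> (k * \1_(Defs.finite_set tau) w)%:E.
  apply: cvg_near_cst.
  case E': (tau w) => [m|].
    exists m => // t /= mt; rewrite /E !indicE !mem_set//.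
      by rewrite /Defs.finite_set /= E'.
    by exists m.
  exists 0%N => // t /= _; rewrite /E !indicE !memNset//.
    by move=> [n]; rewrite E'.
have mS := @finite_meas tau st.
exists E; split; last first.
  move=> w /Atau Aw; have := Ecvg w.
  by rewrite indicE mem_set// mulr1.
split.
- move=> t w; rewrite lee_fin; apply: mulr_ge0 (ltW k0) _; rewrite indicE.
  by case: (_ \in _).
- by move=> t B _; apply: preim_indic; exact: st.
move=> P sigma HP stsig.
have PS : P (Defs.finite_set tau) <= (x + eps)%:E.
  apply: le_trans (ltW hlt); apply: ereal_sup_ubound; left; by exists P.
apply: (@le_trans _ _ (\int[P]_w (k * \1_(Defs.finite_set tau) w)%:E)).
  apply: my_le_integral.
    apply: stopped_ge0 => t w; rewrite lee_fin; apply: mulr_ge0 (ltW k0) _.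
    by rewrite indicE; case: (_ \in _).
  move=> w; rewrite /stopped; case: (sigma w) => [n|]; last first.
    by rewrite (is_cvg_limn_esupE (cvgP _ (Ecvg w))) (cvg_lim _ (Ecvg w)).
  rewrite /E !indicE lee_fin ler_wpM2l ?(ltW k0)//.
  case: (boolP (w \in le_set tau n)) => // /set_mem [m E' _].
  by rewrite mem_set// /Defs.finite_set /= E'.
rewrite (@integralZl_indic _ _ _ P setT measurableT (fun _ => Defs.finite_set tau))//; last first.
  by move=> rn; have := lt_trans rn k0; rewrite ltxx.
rewrite integral_indic// setIT.
have kk : (k * (x + eps) = 1)%R by rewrite mulVf// gt_eqF//; lra.
apply: (@le_trans _ _ (k%:E * (x + eps)%:E)).
  by apply: lee_wpmul2l => //; rewrite lee_fin ltW.
by rewrite -EFinM kk.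
Qed.

End H.

Theorem mainTheorem4 (d : measure_display) (T : measurableType d) (R : realType)
    (F : nat -> set (set T)) (Pfam : set (probability T R)) (A : set T) :
  is_filtration F ->
  (forall eps : R, 0 < eps ->
     exists E : nat -> T -> \bar R, e_process F Pfam E /\
       forall w, A w ->
         (fun t => E t w) @ \oo --> ((fine (mustar F Pfam A) + eps)^-1)%:E) /\
  (forall c : \bar R, (1 <= c)%E ->
     (exists E : nat -> T -> \bar R, e_process F Pfam E /\
        forall w, A w -> (c <= ereal_sup (range (fun t => E t w)))%E) ->
     (mustar F Pfam A <= inv_ext c)%E).
Proof.
move=> hF; split; first by move=> eps e0; exact: (@part1 _ _ _ _ hF).
move=> c c1 [E [Ep hA]].
set x := fine (mustar F Pfam A).
have m0 := @mustar_ge0 _ _ _ F Pfam A; have m1 := @mustar_le1 _ _ _ _ hF Pfam A.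
have mx : mustar F Pfam A = x%:E.
  rewrite /x fineK// ge0_fin_numE//; exact: le_lt_trans m1 (ltey _).
have x0 : 0 <= x by rewrite -lee_fin -mx.
have claim r : 0 < r -> (r%:E < c)%E -> r * x <= 1.
  move=> r0 rc.
  have hA' : forall w, A w -> exists t, (r%:E <= E t w)%E.
    move=> w /hA cs; have := lt_le_trans rc cs.
    by case/ereal_sup_gt => _ [t _ <-] /ltW h; exists t.
  have := @part2_claim _ _ _ _ hF Pfam A E r Ep r0 hA'; rewrite mx lee_fin => h.
  have rr : r * r^-1 = 1 by rewrite mulfV// gt_eqF.
  have ri : 0 < r^-1 by rewrite invr_gt0.
  nra.
clear hA; move: c1 claim; case: c => [r0| |] //; rewrite ?lee_fin => c1 claim; rewrite mx /= lee_fin.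
  rewrite leNgt; apply/negP => h.
  have ri : r0 * r0^-1 = 1 by rewrite mulfV// gt_eqF//; lra.
  have r0i : 0 < r0^-1 by rewrite invr_gt0; lra.
  have xp : 0 < x by lra.
  have xi : x * x^-1 = 1 by rewrite mulfV// gt_eqF.
  have xip : 0 < x^-1 by rewrite invr_gt0.
  have rx : 1 < r0 * x by nra.
  have := claim ((1 + r0 * x) * x^-1 / 2).
  have e1 : (1 + r0 * x) * x^-1 / 2 * x = (1 + r0 * x) / 2.
    by field; rewrite gt_eqF.
  rewrite e1 lte_fin.
  have p1 : 0 < (1 + r0 * x) * x^-1 / 2 by nra.
  have p2 : (1 + r0 * x) * x^-1 / 2 < r0.
    have : (1 + r0 * x) * x^-1 / 2 * x < r0 * x by rewrite e1; lra.
    move=> hh; rewrite -(ltr_pM2r xp); exact: hh.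
  move=> /(_ p1 p2); lra.
rewrite leNgt; apply/negP => h.
have xi : x * x^-1 = 1 by rewrite mulfV// gt_eqF.
have xip : 0 < x^-1 by rewrite invr_gt0.
have := claim (2 * x^-1).
rewrite ltey -mulrA [x^-1 * _]mulrC xi mulr1.
have p : 0 < 2 * x^-1 by nra.
move=> /(_ p isT); lra.
Qed.
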